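(* Let $n\in\mathbb N$, $\beta>0$, real numbers $\kappa_{n,0},\dots,\kappa_{n,n}$ be given, $\mathbb H=L^2(\mathbb R)$, $(\mathcal Af)(x)=f(x+1)$, $g_n=\sum_{j=0}^nj!\,\kappa_{n,j}\mathbb 1_{[-j,-j+1]}$, and $\bar{\mathcal A}_n:=\mathcal A-\beta\langle g_n,\cdot\rangle\mathbb 1_{[0,1]}$. Then for any $k\in\mathbb N\cup\{0\}$, $$\bar{\mathcal A}_n^k\mathbb 1_{[0,1]}=\sum_{i=0}^k\gamma(i,k)\mathbb 1_{[-i,-i+1]},$$ where $\gamma(0,0)=1$ and, for all $k\ge1$, $$\gamma(i,k)=\begin{cases}\gamma(i-1,k-1),& i=1,\dots,k,\\ \sum_{j=0}^{(k-1)\wedge n}(-\beta)\,j!\,\kappa_{n,j}\,\gamma(j,k-1),& i=0.\end{cases}$$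
   Context: In the paper, $\kappa_{n,k}$ are the coefficients of the Bernstein polynomial approximation $K_n(t)=\sum_{k=0}^n\kappa_{n,k}t^k$ of a kernel $K$, but the identity holds for the stated definitions. $\langle\cdot,\cdot\rangle$ is the $L^2(\mathbb R)$ inner product. *)

(* Defs.v *)
From HB Require Import structures.
From mathcomp Require Import all_boot all_order all_algebra.
From mathcomp Require Import all_classical all_reals all_analysis.
Set Implicit Arguments. Unset Strict Implicit. Unset Printing Implicit Defensive.
Import Order.TTheory GRing.Theory Num.Theory.
Local Open Scope classical_set_scope.
Local Open Scope ring_scope.

Definition ind (R : realType) (a b : R) : R -> R := \1_(`[a, b]%classic).

Definition l2inner (R : realType) (f g : R -> R) : R :=
  Rintegral (@lebesgue_measure R) setT (fun x => f x * g x).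

Definition gn (R : realType) (n : nat) (kappa : nat -> R) : R -> R :=
  fun x => \sum_(j < n.+1) (j`!)%:R * kappa j * ind (- (j%:R)) (- (j%:R) + 1) x.

Definition shiftA (R : realType) (f : R -> R) : R -> R := fun x => f (x + 1).

Definition Abar (R : realType) (n : nat) (beta : R) (kappa : nat -> R)
  (f : R -> R) : R -> R :=
  fun x => shiftA f x - beta * l2inner (gn n kappa) f * ind 0 1 x.

Fixpoint gamma (R : realType) (n : nat) (beta : R) (kappa : nat -> R)
  (i k : nat) {struct k} : R :=
  match k with
  | 0 => if i == 0%N then 1 else 0
  | k'.+1 =>
      match i with
      | 0 => \sum_(j < (minn k' n).+1)
               (- beta) * (j`!)%:R * kappa j * gamma n beta kappa j k'
      | i'.+1 => gamma n beta kappa i' k'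
      end
  end.

(* Main.v *)
Require Import Defs.
From HB Require Import structures.
From mathcomp Require Import all_boot all_order all_algebra.
From mathcomp Require Import all_classical all_reals all_analysis.
From mathcomp Require Import measurable_realfun.
From mathcomp Require Import ring zify.
Import Order.TTheory GRing.Theory Num.Theory.
Local Open Scope classical_set_scope.
Local Open Scope ring_scope.

Section S.
Context {R : realType}.
Notation mu := (@lebesgue_measure R).
Definition A (i : nat) : set R := `[- (i%:R), - (i%:R) + 1]%classic.
Definition e (i : nat) : R -> R := ind (- (i%:R)) (- (i%:R) + 1).

Lemma eE i : e i = \1_(A i). Proof. by []. Qed.

Lemma e_int i : mu.-integrable setT (EFin \o e i).
Proof. exact: (@integrable_indic_itv R _ _ true false). Qed.

Lemma e_meas i : measurable_fun setT (e i).
Proof. by apply: measurable_indic; exact: measurable_itv. Qed.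

Lemma e_shift i x : e i (x + 1) = e i.+1 x.
Proof.
rewrite /e /ind !indicE; congr (_%:R).
rewrite !set_itvE !mem_setE -!topredE /= mulrSr.
set a := 1 *+ i.
have -> : - (a + 1) + 1 = - a by rewrite opprD addrNK.
by rewrite opprD lerBlDr lerD2r.
Qed.

Lemma ee_int i j : mu.-integrable setT (EFin \o (fun x => e i x * e j x)).
Proof.
have := @eq_integrable _ _ _ mu setT measurableT ((EFin \o e i) \* (EFin \o e j))%E (EFin \o (fun x => e i x * e j x)).
apply => //.
apply: integrableMr => //; first exact: e_meas.
  exists 1; split => // y y1 x _ /=; rewrite /e /ind indicE.
  by apply: le_trans (ltW y1); case: (x \in _); rewrite ?normr1 ?normr0.
exact: e_int.
Qed.

Lemma Rint_sum m (F : nat -> R -> R) :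
  (forall i, mu.-integrable setT (EFin \o F i)) ->
  mu.-integrable setT (EFin \o (fun x => \sum_(i < m) F i x)) /\
  Rintegral mu setT (fun x => \sum_(i < m) F i x) =
    \sum_(i < m) Rintegral mu setT (F i).
Proof.
move=> Fi; elim: m => [|m [IHi IHe]].
  have -> : (fun x => \sum_(i < 0) F i x) = fun _ => 0.
    by apply/funext => x; rewrite big_ord0.
  split; first exact: integrable0.
  by rewrite big_ord0 Rintegral_cst // mul0r.
have -> : (fun x => \sum_(i < m.+1) F i x) =
          fun x => \sum_(i < m) F i x + F m x.
  by apply/funext => x; rewrite big_ord_recr.
split.
  have := @eq_integrable _ _ _ mu setT measurableT
    ((EFin \o (fun x => (\sum_(i < m) F i x)%R)) \+ (EFin \o F m))%E
    (EFin \o (fun x => \sum_(i < m) F i x + F m x)).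
  by apply => //; apply: integrableD.
by rewrite RintegralD // IHe big_ord_recr.
Qed.

Lemma mA i : measurable (A i). Proof. exact: measurable_itv. Qed.

Lemma mu_A i : mu (A i) = 1%E.
Proof.
rewrite /A lebesgue_measure_itv /= lte_fin ltrDl ltr01 -EFinD.
by rewrite addrAC subrr add0r.
Qed.

Lemma Rint_ind (B : set R) : measurable B ->
  Rintegral mu setT (\1_B) = fine (mu B).
Proof.
move=> mB; rewrite /Rintegral.
by rewrite integral_indic // setIT.
Qed.

Lemma mu_AI i j : (i < j)%N -> mu (A i `&` A j) = 0%E.
Proof.
move=> ij; apply/eqP; rewrite eq_le measure_ge0 andbT.
have H : A i `&` A j `<=` `[- (i%:R), - (j%:R) + 1]%classic.
  move=> x [] /=; rewrite /A /= !in_itv /= => /andP[h1 _] /andP[_ h2].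
  by rewrite h1 h2.
apply: (@le_trans _ _ (mu `[- (i%:R), - (j%:R) + 1]%classic)).
  apply: (le_measure mu _ _ H).
  - by rewrite inE; apply: measurableI; exact: mA.
  - by rewrite inE; exact: measurable_itv.
rewrite lebesgue_measure_itv /=.
case: ifPn => //; rewrite lte_fin ltNge; move/negP; elim.
by rewrite -lerBrDr -opprD lerN2 natr1 ler_nat.
Qed.

Lemma Rint_ee i j :
  Rintegral mu setT (fun x => e i x * e j x) = (i == j)%:R.
Proof.
have -> : (fun x => e i x * e j x) = \1_(A i `&` A j) by rewrite indicI.
rewrite Rint_ind; last by apply: measurableI; exact: mA.
case: (ltngtP i j) => [ij|ji|->].
- by rewrite mu_AI.
- by rewrite setIC mu_AI.
- by rewrite setIid mu_A.
Qed.

Lemma int_scale r f : mu.-integrable setT (EFin \o f) ->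
  mu.-integrable setT (EFin \o (fun x => r * f x)).
Proof.
move=> fi.
have := @eq_integrable _ _ _ mu setT measurableT
    (fun x => r%:E * (EFin \o f) x)%E (EFin \o (fun x => r * f x)).
by apply => //; apply: integrableZl.
Qed.

Lemma sum_delta k (j : nat) (G : nat -> R) :
  \sum_(i < k.+1) G i * (j == i :> nat)%:R = if (j <= k)%N then G j else 0.
Proof.
elim: k => [|k IH].
  rewrite big_ord1 /=; case: j => [|j] /=; first by rewrite mulr1.
  by rewrite mulr0.
rewrite big_ord_recr /= IH.
have [jk|jk|->] := ltngtP j k.+1.
- have -> : (j <= k)%N by lia.
  by rewrite ?mulr0 ?addr0.
- have -> : (j <= k)%N = false by lia.
  by rewrite ?mulr0 ?addr0.
- have -> : (k.+1 <= k)%N = false by lia.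
  by rewrite ?eqxx mulr1 add0r ?leqnn.
Qed.

Lemma sum_trunc n k (H : nat -> R) :
  \sum_(j < n.+1) (if (j <= k)%N then H j else 0) =
  \sum_(j < (minn k n).+1) H j.
Proof.
case: (leqP k n) => kn.
  rewrite -(big_mkord xpredT (fun j => if (j <= k)%N then H j else 0)).
  rewrite -(big_mkord xpredT H).
  rewrite (@big_cat_nat _ _ _ k.+1 0 n.+1) //=.
  have -> : \sum_(k.+1 <= i < n.+1) (if (i <= k)%N then H i else 0) = 0.
    rewrite big_nat_cond big1 // => j /andP[/andP[hj _] _].
    by have -> : (j <= k)%N = false by lia.
  by rewrite addr0; apply: eq_big_nat => j /andP[_ hj]; rewrite -ltnS hj.
apply: eq_bigr => j _.
by have -> : (j <= k)%N by have := ltn_ord j; lia.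
Qed.

Lemma inner_gn n kappa k (b : nat -> R) :
  l2inner (gn n kappa) (fun x => \sum_(i < k.+1) b i * e i x) =
  \sum_(j < (minn k n).+1) (j`!)%:R * kappa j * b j.
Proof.
rewrite /l2inner /gn.
have -> : (fun x => (\sum_(j < n.+1) (j`!)%:R * kappa j * ind (- (j%:R)) (- (j%:R) + 1) x) *
                    (\sum_(i < k.+1) b i * e i x)) =
  fun x => \sum_(j < n.+1) (fun j x => \sum_(i < k.+1)
     (fun i x => ((j`!)%:R * kappa j * b i) * (e j x * e i x)) i x) j x.
  apply/funext => x; rewrite big_distrl; apply: eq_bigr => j _ /=.
  rewrite big_distrr; apply: eq_bigr => i _ /=; rewrite /e; ring.
have hi j i : mu.-integrable setT (EFin \o
   (fun x => ((j`!)%:R * kappa j * b i) * (e j x * e i x))).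
  by apply: int_scale; exact: ee_int.
rewrite (Rint_sum n.+1 (fun j x => \sum_(i < k.+1) (fun i x => ((j`!)%:R * kappa j * b i) * (e j x * e i x)) i x) _).2; last first.
  by move=> j; exact: (Rint_sum k.+1 _ (hi j)).1.
under eq_bigr => j _.
  rewrite (Rint_sum k.+1 _ (hi j)).2.
  under eq_bigr => i _ do rewrite (RintegralZl _ measurableT (ee_int j i)) Rint_ee.
  rewrite (sum_delta k j (fun i => (j`!)%:R * kappa j * b i)).
  over.
exact: (sum_trunc n k (fun j => (j`!)%:R * kappa j * b j)).
Qed.

Lemma iterE n beta kappa k :
  iter k (Abar n beta kappa) (ind 0 1) =
  fun x => \sum_(i < k.+1) gamma n beta kappa i k * e i x.
Proof.
elim: k => [|k IH].
  by apply/funext => x; rewrite /= big_ord1 /= mul1r /e oppr0 add0r.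
rewrite iterS IH; apply/funext => x; rewrite /Abar /shiftA (inner_gn n kappa k (fun i => gamma n beta kappa i k)).
under eq_bigr => i _ do rewrite e_shift.
rewrite [RHS]big_ord_recl /=.
rewrite addrC; congr (_ + _).
have -> : ind 0 1 x = e 0 x by rewrite /e oppr0 add0r.
rewrite big_distrr /= !big_distrl /= -sumrN; apply: eq_bigr => j _.
ring.
Qed.
End S.

Theorem proposition3p2 (R : realType) (n : nat) (beta : R) (kappa : nat -> R)
  (hbeta : 0 < beta) (k : nat) :
  {ae @lebesgue_measure R, forall x : R,
     iter k (Abar n beta kappa) (ind 0 1) x =
     \sum_(i < k.+1) gamma n beta kappa i k * ind (- (i%:R)) (- (i%:R) + 1) x}.
Proof.
apply: aeW => x; by rewrite iterE.
Qed.
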